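(* If $q$ is a prime power, then there exists a $(q,q+1;8)$-bipartite biregular graph of order $(2q+1)(q^2-1)$. In particular, for $q=3$ there exists a $(3,4;8)$-bipartite biregular cage on $56$ vertices, i.e. $B_c(3,4;8)=56$.
   Context: For integers $a,b\geq 2$ and even $g\ge4$, an $(a,b;g)$-bipartite biregular graph is a finite simple bipartite graph of girth exactly $g$ in which all vertices of one bipartition class have degree $a$ and all vertices of the other class have degree $b$. An $(a,b;g)$-bipartite biregular cage is such a graph of minimum possible order, and $B_c(a,b;g)$ denotes this minimum order. *)

(* Defs.v *)
From mathcomp Require Import all_boot.
Set Implicit Arguments. Unset Strict Implicit. Unset Printing Implicit Defensive.

Definition simple_graph (n : nat) (e : rel 'I_n) : Prop :=
  symmetric e /\ irreflexive e.

Definition deg (n : nat) (e : rel 'I_n) (x : 'I_n) : nat := #|[set y | e x y]|.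

Definition is_cycle (n : nat) (e : rel 'I_n) (c : seq 'I_n) : Prop :=
  3 <= size c /\ ucycle e c.

Definition has_girth (n : nat) (e : rel 'I_n) (g : nat) : Prop :=
  (exists c, is_cycle e c /\ size c = g) /\
  (forall c, is_cycle e c -> g <= size c).

Definition bipartite_biregular (n : nat) (e : rel 'I_n) (a b : nat) : Prop :=
  exists A : {set 'I_n},
    (forall x y, e x y -> (x \in A) != (y \in A)) /\
    (forall x, x \in A -> deg e x = a) /\
    (forall x, x \notin A -> deg e x = b).

Definition bbg_exists (a b g n : nat) : Prop :=
  exists e : rel 'I_n,
    simple_graph e /\ bipartite_biregular e a b /\ has_girth e g.

Definition Bc_is (a b g n : nat) : Prop :=
  bbg_exists a b g n /\ (forall m, bbg_exists a b g m -> n <= m).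

Definition prime_power (q : nat) : Prop :=
  exists p k, prime p /\ 0 < k /\ q = p ^ k.

(* Main.v *)
Require Import Defs.
From mathcomp Require Import all_boot all_algebra all_field zify ring.
Set Implicit Arguments. Unset Strict Implicit. Unset Printing Implicit Defensive.
Import GRing.Theory.

Ltac splitands := repeat match goal with
  | H : is_true (_ && _) |- _ => case/andP: H => ? ? end.

Section Generic.
Variable T : eqType.
Variable e : rel T.

Definition no4 := forall a b c d, e a b -> e b c -> e c d -> e d a ->
  a != c -> b != d -> False.
Definition no6 := forall a b c d f g, e a b -> e b c -> e c d -> e d f ->
  e f g -> e g a -> a != c -> c != f -> a != f -> b != d -> d != g -> b != g -> False.

Lemma cycle_ge8 (s : T -> bool) : (forall x y, e x y -> s x != s y) ->
  no4 -> no6 -> forall c, 3 <= size c -> ucycle e c -> 8 <= size c.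
Proof.
move=> hs h4 h6 c hsz hu; rewrite leqNgt; apply/negP => hlt.
move: hsz hu hlt.
case: c => [|x1 [|x2 [|x3 [|x4 [|x5 [|x6 [|x7 [|x8 c]]]]]]]] //= _;
  rewrite /ucycle /= ?inE ?negb_or => H _; splitands.
- move: (hs x1 x2) (hs x2 x3) (hs x3 x1).
  by case: (s x1); case: (s x2); case: (s x3); auto.
- by apply: (h4 x1 x2 x3 x4).
- move: (hs x1 x2) (hs x2 x3) (hs x3 x4) (hs x4 x5) (hs x5 x1).
  by case: (s x1); case: (s x2); case: (s x3); case: (s x4); case: (s x5); auto.
- by apply: (h6 x1 x2 x3 x4 x5 x6).
- move: (hs x1 x2) (hs x2 x3) (hs x3 x4) (hs x4 x5) (hs x5 x6) (hs x6 x7) (hs x7 x1).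
  by case: (s x1); case: (s x2); case: (s x3); case: (s x4); case: (s x5);
     case: (s x6); case: (s x7); auto.
Qed.

Lemma girth_no4 (s : T -> bool) : (forall x y, e x y -> s x != s y) ->
  (forall c, 3 <= size c -> ucycle e c -> 8 <= size c) -> no4.
Proof.
move=> hs hg a b c d e1 e2 e3 e4 nac nbd.
have := hg [:: a; b; c; d] isT.
have nab := hs _ _ e1; have nbc := hs _ _ e2; have ncd := hs _ _ e3; have nda := hs _ _ e4.
have ne : forall x y, s x != s y -> x != y by move=> x y; apply: contraNneq => ->.
rewrite /ucycle /= e1 e2 e3 e4 !inE !negb_or nac (ne _ _ nab) (ne _ _ nbc) (ne _ _ ncd) nbd.
by rewrite eq_sym (ne _ _ nda); move=> /(_ isT).
Qed.

Lemma girth_no6 (s : T -> bool) : (forall x y, e x y -> s x != s y) ->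
  (forall c, 3 <= size c -> ucycle e c -> 8 <= size c) -> no6.
Proof.
move=> hs hg a b c d f g e1 e2 e3 e4 e5 e6 nac ncf naf nbd ndg nbg.
have := hg [:: a; b; c; d; f; g] isT.
have ne : forall x y, s x != s y -> x != y by move=> x y; apply: contraNneq => ->.
have nab := ne _ _ (hs _ _ e1); have nbc := ne _ _ (hs _ _ e2).
have ncd := ne _ _ (hs _ _ e3); have ndf := ne _ _ (hs _ _ e4).
have nfg := ne _ _ (hs _ _ e5); have nga := ne _ _ (hs _ _ e6).
have sad : s a != s d.
  move: (hs _ _ e1) (hs _ _ e2) (hs _ _ e3).
  by case: (s a); case: (s b); case: (s c); case: (s d).
have sbf : s b != s f.
  move: (hs _ _ e2) (hs _ _ e3) (hs _ _ e4).
  by case: (s b); case: (s c); case: (s d); case: (s f).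
have scg : s c != s g.
  move: (hs _ _ e3) (hs _ _ e4) (hs _ _ e5).
  by case: (s c); case: (s d); case: (s f); case: (s g).
rewrite /ucycle /= e1 e2 e3 e4 e5 e6 !inE !negb_or nac naf nbd nbg ncf ndg.
rewrite nab nbc ncd ndf nfg (ne _ _ sad) (ne _ _ sbf) (ne _ _ scg).
by rewrite eq_sym nga; move=> /(_ isT).
Qed.
End Generic.

Lemma transport (T : finType) (e : rel T) (A : {set T}) (a b g : nat) :
  symmetric e -> irreflexive e -> (forall x y, e x y -> (x \in A) != (y \in A)) ->
  (forall x, x \in A -> #|[set y | e x y]| = a) ->
  (forall x, x \notin A -> #|[set y | e x y]| = b) ->
  (exists c, [/\ 3 <= size c, ucycle e c & size c = g]) ->
  (forall c, 3 <= size c -> ucycle e c -> g <= size c) ->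
  bbg_exists a b g #|T|.
Proof.
move=> hsym hirr hside hdA hdB [c0 [c3 cu cs]] hall.
pose ev : 'I_#|T| -> T := enum_val.
exists (fun i j => e (ev i) (ev j)); split; [split|split].
- by move=> i j; apply: hsym.
- by move=> i; apply: hirr.
- exists [set i | ev i \in A]; split; [|split].
  + by move=> x y; rewrite !inE; apply: hside.
  + move=> x; rewrite inE => hx; rewrite /deg -(hdA _ hx).
    have -> : [set y | e (ev x) y] = ev @: [set j | e (ev x) (ev j)].
      apply/setP => y; rewrite inE; apply/idP/imsetP.
        by move=> h; exists (enum_rank y); rewrite ?inE /ev enum_rankK.
      by case=> j; rewrite inE => h ->.
    by rewrite card_imset //; exact: enum_val_inj.
  + move=> x; rewrite inE => hx; rewrite /deg -(hdB _ hx).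
    have -> : [set y | e (ev x) y] = ev @: [set j | e (ev x) (ev j)].
      apply/setP => y; rewrite inE; apply/idP/imsetP.
        by move=> h; exists (enum_rank y); rewrite ?inE /ev enum_rankK.
      by case=> j; rewrite inE => h ->.
    by rewrite card_imset //; exact: enum_val_inj.
- split.
  exists (map enum_rank c0); split; [split|]; rewrite ?size_map //.
  move: cu; rewrite /ucycle cycle_map (map_inj_uniq enum_rank_inj) => /andP[h1 ->].
  rewrite andbT; move: h1; congr (is_true _); apply: eq_cycle => x y /=.
  by rewrite /ev !enum_rankK.
  move=> c [c3' cu']; rewrite -(size_map ev); apply: hall; rewrite ?size_map //.
  move: cu'; rewrite /ucycle cycle_map (map_inj_uniq enum_val_inj) => /andP[h1 ->].
  by rewrite andbT.
Qed.

Section Alg.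
Local Open Scope ring_scope.
Variable F : fieldType.

Definition mv (M : F * F * F * F) (v : F * F) : F * F :=
  let: (a, b, c, d) := M in (a * v.1 + b * v.2, c * v.1 + d * v.2).
Definition det2 (v w : F * F) : F := v.1 * w.2 - v.2 * w.1.
Definition detM (M : F * F * F * F) : F := let: (a, b, c, d) := M in a * d - b * c.

Lemma det2_mv M v w : det2 (mv M v) (mv M w) = detM M * det2 v w.
Proof. case: M => [[[a b] c] d]; case: v => v1 v2; case: w => w1 w2; rewrite /det2 /=; ring. Qed.

Lemma det2_swap v w : det2 v w = - det2 w v.
Proof. case: v => v1 v2; case: w => w1 w2; rewrite /det2 /=; ring. Qed.

Lemma cramer0 (x y : F) (v w : F * F) : det2 v w != 0 ->
  x * v.1 + y * v.2 = 0 -> x * w.1 + y * w.2 = 0 -> x = 0 /\ y = 0.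
Proof.
case: v => v1 v2; case: w => w1 w2; rewrite /det2 /= => hd h1 h2.
have hx : x * (v1 * w2 - v2 * w1) = 0.
  have -> : x * (v1 * w2 - v2 * w1) = w2 * (x * v1 + y * v2) - v2 * (x * w1 + y * w2) by ring.
  by rewrite h1 h2; ring.
have hy : y * (v1 * w2 - v2 * w1) = 0.
  have -> : y * (v1 * w2 - v2 * w1) = v1 * (x * w1 + y * w2) - w1 * (x * v1 + y * v2) by ring.
  by rewrite h1 h2; ring.
move/eqP: hx; move/eqP: hy; rewrite !mulf_eq0 (negbTE hd) !orbF => /eqP -> /eqP ->.
by [].
Qed.

Lemma mv_eq M N v w : det2 v w != 0 -> mv M v = mv N v -> mv M w = mv N w -> M = N.
Proof.
case: M => [[[a b] c] d]; case: N => [[[a' b'] c'] d'] hd /= [e1 e2] [e3 e4].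
have [ha hb] : a - a' = 0 /\ b - b' = 0.
  apply: (cramer0 hd).
    by rewrite !mulrBl addrACA e1 -opprD subrr.
  by rewrite !mulrBl addrACA e3 -opprD subrr.
have [hc hd'] : c - c' = 0 /\ d - d' = 0.
  apply: (cramer0 hd).
    by rewrite !mulrBl addrACA e2 -opprD subrr.
  by rewrite !mulrBl addrACA e4 -opprD subrr.
by move/eqP: ha; move/eqP: hb; move/eqP: hc; move/eqP: hd'; rewrite !subr_eq0 => /eqP-> /eqP-> /eqP-> /eqP->.
Qed.

Lemma vec0 (z w1 w2 : F * F) : det2 w1 w2 != 0 -> det2 z w1 = 0 -> det2 z w2 = 0 -> z = (0, 0).
Proof.
case: z => z1 z2; case: w1 => a1 a2; case: w2 => b1 b2; rewrite /det2 /= => hd h1 h2.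
have hx : z1 * (a1 * b2 - a2 * b1) = 0.
  have -> : z1 * (a1 * b2 - a2 * b1) = a1 * (z1 * b2 - z2 * b1) - b1 * (z1 * a2 - z2 * a1) by ring.
  by rewrite h1 h2; ring.
have hy : z2 * (a1 * b2 - a2 * b1) = 0.
  have -> : z2 * (a1 * b2 - a2 * b1) = a2 * (z1 * b2 - z2 * b1) - b2 * (z1 * a2 - z2 * a1) by ring.
  by rewrite h1 h2; ring.
move/eqP: hx; move/eqP: hy; rewrite !mulf_eq0 (negbTE hd) !orbF => /eqP -> /eqP ->.
by [].
Qed.
End Alg.

Section Graph.
Local Open Scope ring_scope.
Variable F : finFieldType.

Definition uvec (u : option F) : F * F := if u is Some x then (1, x) else (0, 1).

Lemma det2_uvec u u' : u != u' -> det2 (uvec u) (uvec u') != 0.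
Proof.
case: u => [x|]; case: u' => [y|] //= h; rewrite /det2 /=.
- rewrite mul1r mulr1 subr_eq0; apply: contra h => /eqP ->; by [].
- by rewrite mulr1 mulr0 subr0 oner_eq0.
- by rewrite mul0r mulr1 sub0r oppr_eq0 oner_eq0.
Qed.

Definition Wt := {w : F * F | w != (0, 0)}.
Definition Pt := (option F * Wt)%type.
Definition Ln := {M : F * F * F * F | detM M == -1}.
Definition V := (Pt + Ln)%type.

Definition inc (p : Pt) (M : Ln) : bool := mv (val M) (uvec p.1) == val p.2.

Definition ge : rel V := fun x y =>
  match x, y with
  | inl p, inr M => inc p M
  | inr M, inl p => inc p M
  | _, _ => false
  end.

Lemma same_u p p' M : inc p M -> inc p' M -> p.1 = p'.1 -> p = p'.
Proof.
case: p => u w; case: p' => u' w' /= /eqP h /eqP h' eu; subst u'.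
by congr pair; apply: val_inj; rewrite -h -h'.
Qed.

Lemma core4 p p' M N : inc p M -> inc p' M -> inc p N -> inc p' N -> p != p' -> M = N.
Proof.
move=> h1 h2 h3 h4 np.
have [eu|nu] := eqVneq p.1 p'.1.
  by rewrite (same_u h1 h2 eu) eqxx in np.
apply: val_inj; apply: (mv_eq (det2_uvec nu)).
  by rewrite (eqP h1) (eqP h3).
by rewrite (eqP h2) (eqP h4).
Qed.

Lemma rel_on p p' M : inc p M -> inc p' M ->
  det2 (val p.2) (val p'.2) = - det2 (uvec p.1) (uvec p'.1).
Proof.
move=> /eqP h /eqP h'; rewrite -h -h' det2_mv (eqP (valP M)); ring.
Qed.

Definition zf (d a b : F) (w1 w2 w3 : F * F) : F * F :=
  (d * w3.1 - a * w1.1 - b * w2.1, d * w3.2 - a * w1.2 - b * w2.2).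

Lemma core6 p1 p2 p3 M1 M2 M3 : inc p1 M1 -> inc p2 M1 -> inc p2 M2 -> inc p3 M2 ->
  inc p3 M3 -> inc p1 M3 -> p1 != p2 -> p2 != p3 -> M1 != M2 -> False.
Proof.
move=> i11 i21 i22 i32 i33 i13 n12 n23 nM12.
have nu12 : p1.1 != p2.1 by apply: contra n12 => /eqP h; rewrite (same_u i11 i21 h).
set u1 := uvec p1.1; set u2 := uvec p2.1; set u3 := uvec p3.1.
set w1 := val p1.2; set w2 := val p2.2; set w3 := val p3.2.
have hd : det2 u1 u2 != 0 := det2_uvec nu12.
have B12 : det2 w1 w2 = - det2 u1 u2 := rel_on i11 i21.
have B32 : det2 w3 w2 = - det2 u3 u2 := rel_on i32 i22.
have B31 : det2 w3 w1 = - det2 u3 u1 := rel_on i33 i13.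
have B21 : det2 w2 w1 = - det2 u2 u1 := rel_on i21 i11.
set z := zf (det2 u1 u2) (det2 u3 u2) (det2 u1 u3) w1 w2 w3.
have I1 : det2 z w1 = det2 u1 u2 * det2 w3 w1 - det2 u1 u3 * det2 w2 w1.
  rewrite /z /zf /det2 /=; ring.
have I2 : det2 z w2 = det2 u1 u2 * det2 w3 w2 - det2 u3 u2 * det2 w1 w2.
  rewrite /z /zf /det2 /=; ring.
have z0 : z = (0, 0).
  apply: (vec0 (w1 := w1) (w2 := w2)).
  - by rewrite B12 oppr_eq0.
  - by rewrite I1 B31 B21 (det2_swap u3 u1) (det2_swap u2 u1); ring.
  - by rewrite I2 B32 B12; ring.
have i31 : inc p3 M1.
  apply/eqP; move: z0; rewrite /z /zf => -[e1 e2].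
  have E1 : det2 u1 u2 * (mv (val M1) u3).1 = det2 u3 u2 * (mv (val M1) u1).1 + det2 u1 u3 * (mv (val M1) u2).1.
    case: (val M1) => [[[a b] c] d]; rewrite /det2 /=; ring.
  have E2 : det2 u1 u2 * (mv (val M1) u3).2 = det2 u3 u2 * (mv (val M1) u1).2 + det2 u1 u3 * (mv (val M1) u2).2.
    case: (val M1) => [[[a b] c] d]; rewrite /det2 /=; ring.
  rewrite (eqP i11) (eqP i21) -/w1 -/w2 in E1 E2.
  move: (mv (val M1) u3) E1 E2 => [m1 m2] /= E1 E2.
  rewrite [sval p3.2]surjective_pairing; congr pair.
    apply: (mulfI hd); rewrite E1; apply/eqP; rewrite -subr_eq0 -oppr_eq0; apply/eqP; rewrite -[X in _ = X]e1 /w3; ring.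
  apply: (mulfI hd); rewrite E2; apply/eqP; rewrite -subr_eq0 -oppr_eq0; apply/eqP; rewrite -[X in _ = X]e2 /w3; ring.
by move: (core4 i21 i31 i22 i32 n23); apply/eqP.
Qed.

Lemma w0_proof : (1, 0) != (0, 0) :> F * F.
Proof. by rewrite xpair_eqE oner_eq0. Qed.
Lemma L0_proof : detM (0, 1, 1, 0) == -1 :> F.
Proof. by rewrite /detM mul0r mul1r sub0r. Qed.
Definition w0 : Wt := exist _ (1, 0) w0_proof.
Definition L0 : Ln := exist _ (0, 1, 1, 0) L0_proof.
Definition mkw (w : F * F) : Wt := insubd w0 w.
Definition mkL (M : F * F * F * F) : Ln := insubd L0 M.
Lemma val_mkw w : w != (0, 0) -> val (mkw w) = w.
Proof. by move=> h; rewrite /mkw insubdK. Qed.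
Lemma val_mkL M : detM M == -1 -> val (mkL M) = M.
Proof. by move=> h; rewrite /mkL insubdK. Qed.

Lemma mv_nz (M : Ln) u : mv (val M) (uvec u) != (0, 0).
Proof.
pose u' : option F := if u is None then Some 0 else None.
have nu : u != u' by rewrite /u'; case: (u).
have := det2_uvec nu; apply: contra => /eqP h.
have e := det2_mv (val M) (uvec u) (uvec u'); rewrite (eqP (valP M)) h in e.
by move: e; rewrite {1}/det2 /= !mul0r subr0 => /esym/eqP; rewrite mulN1r oppr_eq0.
Qed.

Lemma degL (M : Ln) : #|[set p : Pt | inc p M]| = #|F|.+1.
Proof.
have -> : [set p : Pt | inc p M] = [set (u, mkw (mv (val M) (uvec u))) | u : option F].
  apply/setP => [[u w]]; rewrite inE /inc /=; apply/idP/imsetP.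
    move=> /eqP h; exists u => //; congr pair; apply: val_inj.
    by rewrite val_mkw; [exact: (esym h) | exact: mv_nz].
  by case=> u' _ [-> ->]; rewrite val_mkw //; exact: mv_nz.
by rewrite card_imset ?card_option // => u u' [].
Qed.

Lemma count_lin (al be ga : F) : (al, be) != (0, 0) ->
  #|[set st : F * F | al * st.2 - be * st.1 == ga]| = #|F|.
Proof.
move=> hab.
have [be0|nbe] := eqVneq be 0.
  subst be; have nal : al != 0 by move: hab; rewrite xpair_eqE eqxx andbT.
  have -> : [set st : F * F | al * st.2 - 0 * st.1 == ga] = [set (s, ga / al) | s : F].
    apply/setP => [[s t]]; rewrite inE /=; apply/idP/imsetP.
      rewrite mul0r subr0 => /eqP h; exists s => //; congr pair.
      by rewrite -h mulrC mulKf.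
    by case=> s' _ [-> ->]; rewrite mul0r subr0 mulrCA mulfV // mulr1.
  by rewrite card_imset // => s s' [].
have -> : [set st : F * F | al * st.2 - be * st.1 == ga] = [set ((al * t - ga) / be, t) | t : F].
  apply/setP => [[s t]]; rewrite inE /=; apply/idP/imsetP.
    move=> /eqP h; exists t => //; congr pair.
    by rewrite -h opprB addrC subrK mulrC mulKf.
  by case=> t' _ [-> ->]; rewrite mulrCA mulfV // mulr1 opprB addrC subrK.
by rewrite card_imset // => t t' [].
Qed.

Definition mkM (u : option F) (w : F * F) (st : F * F) : F * F * F * F :=
  match u with
  | Some x => (w.1 - st.1 * x, st.1, w.2 - st.2 * x, st.2)
  | None => (st.2, w.1, st.1, w.2)
  end.
Definition cof (u : option F) (w : F * F) : F * F :=
  if u is Some _ then w else (w.2, w.1).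
Definition sel (u : option F) (M : F * F * F * F) : F * F :=
  let: (a, b, c, d) := M in if u is Some _ then (b, d) else (c, a).

Lemma detM_mkM u w st : detM (mkM u w st) = (cof u w).1 * st.2 - (cof u w).2 * st.1.
Proof. by case: u => [x|]; rewrite /detM /=; ring. Qed.
Lemma mv_mkM u w st : mv (mkM u w st) (uvec u) = w.
Proof.
case: w => w1 w2; case: u => [x|] /=; congr pair; ring.
Qed.
Lemma mkM_sel u w M : mv M (uvec u) = w -> mkM u w (sel u M) = M.
Proof.
case: M => [[[a b] c] d]; case: u => [x|] /= <- /=; congr (_, _, _, _); ring.
Qed.
Lemma sel_mkM u w st : sel u (mkM u w st) = st.
Proof. by case: u => [x|]; case: st. Qed.

Lemma degP (p : Pt) : #|[set M : Ln | inc p M]| = #|F|.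
Proof.
case: p => u w.
have nz : (cof u (val w)) != (0, 0).
  by case: w => [[w1 w2] hw]; case: u => [x|] //=; move: hw; rewrite !xpair_eqE // andbC.
rewrite -(count_lin (-1) nz).
have -> : [set M : Ln | inc (u, w) M] =
   [set mkL (mkM u (val w) st) | st in [set st : F * F | (cof u (val w)).1 * st.2 - (cof u (val w)).2 * st.1 == -1]].
  apply/setP => M; rewrite inE /inc /=; apply/idP/imsetP.
    move=> /eqP h0; have h := mkM_sel (u:=u) (w:=val w) (M:=val M) h0.
    exists (sel u (val M)).
      by rewrite inE -detM_mkM h (valP M).
    by apply: val_inj; rewrite val_mkL h // (valP M).
  case=> st; rewrite inE => hst ->; rewrite /inc /= val_mkL ?mv_mkM //.
  by rewrite detM_mkM.
rewrite card_in_imset // => st st'; rewrite !inE => h1 h2 /(congr1 val).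
rewrite !val_mkL ?detM_mkM // => /(congr1 (sel u)).
by rewrite !sel_mkM.
Qed.

Definition sideV (x : V) : bool := if x is inl _ then true else false.
Lemma ge_sym : symmetric ge. Proof. by case=> ?; case=> ?. Qed.
Lemma ge_irr : irreflexive ge. Proof. by case. Qed.
Lemma ge_side x y : ge x y -> sideV x != sideV y. Proof. by case: x; case: y. Qed.

Lemma ge_no4 : no4 ge.
Proof.
move=> [p|M] [q|N] [r|K] [s|O] //= e1 e2 e3 e4 nac nbd.
  have np : p != r by apply: contra nac => /eqP ->.
  have h := core4 e1 e2 e4 e3 np.
  by move: nbd; rewrite h eqxx.
have np : q != s by apply: contra nbd => /eqP ->.
have h := core4 e1 e4 e2 e3 np.
by move: nac; rewrite h eqxx.
Qed.

Lemma ge_no6 : no6 ge.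
Proof.
move=> [p1|M1] [p2|M2] [p3|M3] [p4|M4] [p5|M5] [p6|M6] //= e1 e2 e3 e4 e5 e6 nac ncf naf nbd ndg nbg.
  have n1 : p1 != p3 by apply: contra nac => /eqP ->.
  have n2 : p3 != p5 by apply: contra ncf => /eqP ->.
  have n3 : M2 != M4 by apply: contra nbd => /eqP ->.
  exact: (core6 e1 e2 e3 e4 e5 e6 n1 n2 n3).
have n1 : M1 != M3 by apply: contra nac => /eqP ->.
have n2 : p2 != p4 by apply: contra nbd => /eqP ->.
have n3 : p6 != p2 by rewrite eq_sym; apply: contra nbg => /eqP ->.
exact: (core6 e6 e1 e2 e3 e4 e5 n3 n2 n1).
Qed.

Lemma degV_P p : #|[set y | ge (inl p) y]| = #|F|.
Proof.
rewrite -(degP p) -(card_imset _ (@inr_inj Pt Ln)); apply: eq_card.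
move=> [q|M]; rewrite inE /=.
  by apply/esym/imsetP => -[M _].
apply/idP/imsetP; first by move=> h; exists M; rewrite ?inE.
by case=> N; rewrite inE => h [->].
Qed.

Lemma degV_L M : #|[set y | ge (inr M) y]| = #|F|.+1.
Proof.
rewrite -(degL M) -(card_imset _ (@inl_inj Pt Ln)); apply: eq_card.
move=> [p|N]; rewrite inE /=.
  apply/idP/imsetP; first by move=> h; exists p; rewrite ?inE.
  by case=> q; rewrite inE => h [->].
by apply/esym/imsetP => -[p _].
Qed.

Lemma card_Pt : (#|{: Pt}| = #|F|.+1 * (#|F| * #|F| - 1))%N.
Proof.
rewrite card_prod card_option card_sig.
have -> : #|[pred x : F * F | x != (0, 0)]| = (#|F| * #|F|).-1.
  by rewrite -card_prod -(cardC1 (0, 0)); apply: eq_card.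
by rewrite subn1.
Qed.

Lemma dcountPL : (#|{: Pt}| * #|F| = #|{: Ln}| * #|F|.+1)%N.
Proof.
transitivity ((\sum_(p : Pt) #|[set M : Ln | inc p M]|)%N).
  transitivity ((\sum_(p : Pt) #|F|)%N); first by rewrite sum_nat_const.
  by apply: eq_bigr => p _; rewrite degP.
transitivity ((\sum_(p : Pt) \sum_(M : Ln) (inc p M : nat))%N).
  apply: eq_bigr => p _; rewrite -sum1dep_card big_mkcond /=.
  by apply: eq_bigr => M _; case: (inc p M).
rewrite exchange_big.
transitivity ((\sum_(M : Ln) #|[set p : Pt | inc p M]|)%N).
  apply: eq_bigr => M _; rewrite -sum1dep_card [RHS]big_mkcond /=.
  by apply: eq_bigr => p _; case: (inc p M).
transitivity ((\sum_(M : Ln) #|F|.+1)%N); first by apply: eq_bigr => M _; rewrite degL.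
by rewrite sum_nat_const.
Qed.

Lemma card_V : (#|{: V}| = (2 * #|F| + 1) * (#|F| ^ 2 - 1))%N.
Proof.
have hL : (#|{: Ln}| = #|F| * (#|F| * #|F| - 1))%N.
  apply/eqP; rewrite -(eqn_pmul2r (ltn0Sn #|F|)); apply/eqP.
  rewrite -dcountPL card_Pt; set r := (#|F| * #|F| - 1)%N; nia.
rewrite card_sum card_Pt hL; nia.
Qed.

Definition sigV (x : V) : seq bool :=
  match x with
  | inl p => [:: true; p.1 == None; odflt 0 p.1 == 0; (val p.2).1 == 0; (val p.2).2 == 0]
  | inr M => let: (a, b, c, d) := val M in [:: false; a == 0; b == 0; c == 0; d == 0]
  end.

Lemma sig_P u w : w != (0, 0) -> sigV (inl (u, mkw w)) =
  [:: true; u == None; odflt 0 u == 0; w.1 == 0; w.2 == 0].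
Proof. by move=> h; rewrite /sigV /= val_mkw. Qed.
Lemma sig_L a b c d : detM (a, b, c, d) == -1 -> sigV (inr (mkL (a, b, c, d))) =
  [:: false; a == 0; b == 0; c == 0; d == 0].
Proof. by move=> h; rewrite /sigV /= val_mkL. Qed.

Lemma inc_mk u w M : w != (0, 0) -> detM M == -1 -> mv M (uvec u) = w ->
  inc (u, mkw w) (mkL M).
Proof. by move=> h1 h2 h3; rewrite /inc /= val_mkw // val_mkL // h3. Qed.

Lemma cycle8 : exists c, [/\ (3 <= size c)%N, ucycle ge c & size c = 8%N].
Proof.
have n10 : (1, 0) != (0, 0) :> F * F by rewrite xpair_eqE oner_eq0.
have n01 : (0, 1) != (0, 0) :> F * F by rewrite xpair_eqE oner_eq0 andbF.
have n11 : (1, 1) != (0, 0) :> F * F by rewrite xpair_eqE oner_eq0.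
have d1 : detM (0, 1, 1, 0) == -1 :> F by apply/eqP; rewrite /detM; ring.
have d2 : detM (0, 1, 1, 1) == -1 :> F by apply/eqP; rewrite /detM; ring.
have d3 : detM (-1, 1, 0, 1) == -1 :> F by apply/eqP; rewrite /detM; ring.
have d4 : detM (-1, 1, 1, 0) == -1 :> F by apply/eqP; rewrite /detM; ring.
pose p1 : Pt := (None, mkw (1, 0)).
pose p2 : Pt := (Some 0, mkw (0, 1)).
pose p3 : Pt := (None, mkw (1, 1)).
pose p4 : Pt := (Some 1, mkw (0, 1)).
pose M1 := mkL (0, 1, 1, 0).
pose M2 := mkL (0, 1, 1, 1).
pose M3 := mkL (-1, 1, 0, 1).
pose M4 := mkL (-1, 1, 1, 0).
exists [:: inl p1; inr M1; inl p2; inr M2; inl p3; inr M3; inl p4; inr M4].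
split => //; apply/andP; split.
  rewrite /= !inc_mk //; rewrite /mv /=; congr pair; ring.
apply: (@map_uniq _ _ sigV).
rewrite !map_cons /p1 /p2 /p3 /p4 /M1 /M2 /M3 /M4 !sig_P // !sig_L //= !eqxx oner_eq0 oppr_eq0 oner_eq0.
by [].
Qed.

Lemma constr : bbg_exists #|F| #|F|.+1 8 ((2 * #|F| + 1) * (#|F| ^ 2 - 1))%N.
Proof.
rewrite -card_V.
apply: (transport (A := [set x | sideV x]) ge_sym ge_irr _ _ _ cycle8).
- by move=> x y; rewrite !inE; apply: ge_side.
- by case=> [p|M]; rewrite inE //= => _; exact: degV_P.
- by case=> [p|M]; rewrite inE //= => _; exact: degV_L.
- exact: (cycle_ge8 ge_side ge_no4 ge_no6).
Qed.
End Graph.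


Lemma card_bigcup_disj (T I : finType) (F : I -> {set T}) :
  (forall i j, i != j -> [disjoint F i & F j]) -> #|\bigcup_i F i| = \sum_i #|F i|.
Proof.
move=> h; rewrite -sum1_card (partition_disjoint_bigcup _ _ h).
by apply: eq_bigr => i _; rewrite sum1_card.
Qed.

Lemma disjP (T : finType) (B C : {set T}) :
  (forall r, r \in B -> r \in C -> False) -> [disjoint B & C].
Proof.
move=> h; rewrite -setI_eq0; apply/eqP/setP => r; rewrite !inE.
by apply/negP => /andP[h1 h2]; apply: (h r).
Qed.

Section TrIdem.
Local Open Scope ring_scope.

Lemma tr_idem (F : fieldType) m (E : 'M[F]_m) : E *m E = E -> \tr E = (\rank E)%:R.
Proof.
move=> EE.
have hb := mulmx_base E.
move: (col_base E) (row_base E) (col_base_full E) (row_base_free E) hb EE.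
move: (\rank E) => r C R fC fR hb EE.
have h1 : C *m ((R *m C) *m R) = C *m (1%:M *m R).
  by rewrite mul1mx !mulmxA hb -mulmxA hb EE.
have h2 := row_full_inj fC h1.
have h3 : R *m C = 1%:M := row_free_inj fR h2.
by rewrite -hb mxtrace_mulC h3 mxtrace1.
Qed.
End TrIdem.

Section Lower.
Variable n : nat.
Variable e : rel 'I_n.
Variable A : {set 'I_n}.
Hypothesis hsym : symmetric e.
Hypothesis hside : forall x y, e x y -> (x \in A) != (y \in A).
Hypothesis hdA : forall x, x \in A -> deg e x = 3.
Hypothesis hdB : forall x, x \notin A -> deg e x = 4.
Hypothesis h4 : no4 e.
Hypothesis h6 : no6 e.

Ltac ss := first [done | by rewrite hsym | by rewrite eq_sym | by rewrite hsym eq_sym].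

Definition N x := [set y | e x y].

Lemma deg_sum x : deg e x = \sum_y e x y.
Proof.
rewrite /deg -sum1dep_card big_mkcond /=.
by apply: eq_bigr => y _; case: (e x y).
Qed.

Lemma AnotA x y : e x y -> x \in A -> y \notin A.
Proof. by move/hside; case: (x \in A); case: (y \in A). Qed.
Lemma notAA x y : e x y -> x \notin A -> y \in A.
Proof. by move/hside; case: (x \in A); case: (y \in A). Qed.

Lemma dcount : \sum_(x in A) deg e x = \sum_(x in ~: A) deg e x.
Proof.
transitivity (\sum_(x in A) \sum_y (e x y : nat)).
  by apply: eq_bigr => x _; exact: deg_sum.
rewrite exchange_big [RHS]big_mkcond; apply: eq_bigr => y _.
rewrite in_setC; case: (boolP (y \in A)) => hy /=.
  apply: big1 => x hx; case hxy: (e x y) => //.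
  by move: (AnotA hxy hx); rewrite hy.
rewrite deg_sum [RHS](bigID (mem A)) /= [X in _ = _ + X]big1 ?addn0.
  by apply: eq_bigr => x _; rewrite hsym.
move=> x hx; case hxy: (e y x) => //.
by move: (notAA hxy hy); rewrite (negbTE hx).
Qed.

Lemma count34 : #|A| * 3 = #|~: A| * 4.
Proof.
rewrite -!sum_nat_const.
transitivity (\sum_(x in A) deg e x); first by apply: eq_bigr => x /hdA.
by rewrite dcount; apply: eq_bigr => x; rewrite inE => /hdB.
Qed.

Section Tree.
Variable L : 'I_n.
Hypothesis LA : L \in A.

Definition F (p : 'I_n * 'I_n) :=
  if [&& e L p.1, e p.1 p.2 & p.2 != L] then N p.2 :\ p.1 else set0.
Definition R2 := \bigcup_p F p.

Lemma inF p r : (r \in F p) = [&& e L p.1, e p.1 p.2, p.2 != L, r != p.1 & e p.2 r].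
Proof.
rewrite /F; case: (boolP [&& _, _ & _]) => [/and3P[-> -> ->]|h].
  by rewrite !inE.
rewrite inE; apply/esym/negP => /and5P[h1 h2 h3 _ _]; case/negP: h.
by rewrite h1 h2 h3.
Qed.

Lemma F_disj : forall i j, i != j -> [disjoint F i & F j].
Proof.
move=> [q M] [q' M'] hne; apply: disjP => r.
rewrite !inF /= => /and5P[eLq eqM nML nrq eMr] /and5P[eLq' eqM' nM'L nrq' eM'r].
have [eqq|nqq] := eqVneq q q'.
  subst q'; have nMM : M != M' by apply: contraNneq hne => ->.
  apply: (h4 (a:=q) (b:=M) (c:=r) (d:=M')) => //; first by rewrite hsym.
  by rewrite hsym.
  by rewrite eq_sym.
have [eMM|nMM] := eqVneq M M'.
  subst M'; apply: (h4 (a:=q) (b:=M) (c:=q') (d:=L)) => //; by rewrite hsym.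
apply: (h6 (a:=q) (b:=L) (c:=q') (d:=M') (f:=r) (g:=M)) => //; ss.
Qed.

Lemma card_NM q M : e q M -> q \notin A -> #|N M :\ q| = 2.
Proof.
move=> eqM qA; have MA := notAA eqM qA.
have hq : q \in N M by rewrite inE hsym.
by move: (hdA MA); rewrite /deg -/(N M) (cardsD1 q) hq; case.
Qed.

Lemma card_R2 : #|R2| = 18.
Proof.
rewrite /R2 card_bigcup_disj; last exact: F_disj.
rewrite -(pair_big xpredT xpredT (fun q M => #|F (q, M)|)) /=.
transitivity (\sum_(q | e L q) 6).
  rewrite [LHS](bigID (fun q => e L q)) /= [X in _ + X]big1 ?addn0.
    apply: eq_bigr => q eLq.
    have qA : q \notin A := AnotA eLq LA.
    transitivity (\sum_(M | e q M && (M != L)) 2).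
      rewrite [LHS](bigID (fun M => e q M && (M != L))) /= [X in _ + X]big1 ?addn0.
        apply: eq_bigr => M /andP[eqM nML].
        by rewrite /F /= eLq eqM nML /= card_NM.
      by move=> M hM; rewrite /F /= eLq (negbTE hM) cards0.
    rewrite sum_nat_const.
    have -> : #|[pred M | e q M && (M != L)]| = #|N q :\ L|.
      by apply: eq_card => M; rewrite !inE andbC.
    have hL : L \in N q by rewrite inE hsym.
    by move: (hdB qA); rewrite /deg -/(N q) (cardsD1 L) hL /=; lia.
  move=> q hq; apply: big1 => M _.
  by rewrite /F /= (negbTE hq) cards0.
rewrite sum_nat_const.
have : #|[pred q | e L q]| = 3 by rewrite -(hdA LA) /deg; apply: eq_card => q; rewrite inE.
by move=> ->.
Qed.

Definition R := N L :|: R2.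

Lemma card_R : #|R| = 21.
Proof.
rewrite /R cardsU card_R2.
have -> : N L :&: R2 = set0.
  apply/setP => r; rewrite !inE; apply/negP => /andP[eLr /bigcupP[[q M] _]].
  rewrite inF /= => /and5P[eLq eqM nML nrq eMr].
  apply: (h4 (a:=q) (b:=L) (c:=r) (d:=M)) => //; try by rewrite hsym.
  by rewrite eq_sym.
  by rewrite eq_sym.
by rewrite cards0 /N -/(deg e L) hdA.
Qed.

Lemma R_sub : R \subset ~: A.
Proof.
apply/subsetP => r; rewrite !inE => /orP[eLr|/bigcupP[[q M] _]].
  exact: AnotA eLr LA.
rewrite inF /= => /and5P[eLq eqM nML nrq eMr].
exact: AnotA eMr (notAA eqM (AnotA eLq LA)).
Qed.

Lemma ge21 : 21 <= #|~: A|.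
Proof. by rewrite -card_R; apply: subset_leq_card; exact: R_sub. Qed.

Lemma gq21 : #|~: A| = 21 -> forall x, x \notin A -> ~~ e L x ->
  exists q M, [&& e L q, e q M, M != L, x != q & e M x].
Proof.
move=> h21 x xA nLx.
have : x \in R.
  have /subset_cardP hR : #|R| = #|~: A| by rewrite card_R h21.
  by rewrite (hR R_sub) inE.
rewrite inE inE (negbTE nLx) /= => /bigcupP[[q M] _]; rewrite inF /= => H.
by exists q, M.
Qed.
End Tree.

Section SRG.
Hypothesis h21 : #|~: A| = 21.

Definition colb x y := [&& x \notin A, x != y & [exists M, e x M && e M y]].

Lemma colP x y : reflect (exists M, [/\ x \notin A, x != y, e x M & e M y]) (colb x y).
Proof.
apply: (iffP and3P) => [[k1 k2 /existsP[M /andP[k3 k4]]]|[M [k1 k2 k3 k4]]].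
  by exists M.
by split => //; apply/existsP; exists M; rewrite k3.
Qed.

Lemma colBy x y : colb x y -> y \notin A.
Proof. by case/colP => M [xA _ exM eMy]; exact: AnotA eMy (notAA exM xA). Qed.

Lemma col_sym x y : colb x y = colb y x.
Proof.
by apply/idP/idP => h; have yA := colBy h; case/colP: h => M [xA nxy exM eMy];
  apply/colP; exists M; split => //; rewrite 1?eq_sym 1?hsym.
Qed.

Lemma gq L x : L \in A -> x \notin A -> ~~ e L x -> exists q, e L q && colb q x.
Proof.
move=> LA xA nLx; have [q [M /and5P[eLq eqM nML nxq eMx]]] := gq21 LA h21 xA nLx.
exists q; rewrite eLq /=; apply/colP; exists M; split => //.
  exact: AnotA eLq LA.
by rewrite eq_sym.
Qed.

Lemma uniq_line M x z z' : M \in A -> ~~ e M x -> e M z -> e M z' ->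
  colb x z -> colb x z' -> z = z'.
Proof.
move=> MA nMx eMz eMz' /colP[M1 [xA nxz exM1 eM1z]] /colP[M2 [_ nxz' exM2 eM2z']].
apply/eqP/negP => /negP nzz'.
have nM1M : M1 != M by apply: contraNneq nMx => <-; rewrite hsym.
have nMM2 : M != M2 by apply: contraNneq nMx => ->; rewrite hsym.
have [eM12|nM12] := eqVneq M1 M2.
  subst M2; apply: (h4 (a:=z) (b:=M) (c:=z') (d:=M1)) => //; ss.
apply: (h6 (a:=x) (b:=M1) (c:=z) (d:=M) (f:=z') (g:=M2)) => //; ss.
Qed.

Definition cnt x y := #|[set z | colb x z && colb z y]|.

Definition G x M := if e x M then N M :\ x else set0.

Lemma ncol x : x \notin A -> #|[set z | colb x z]| = 8.
Proof.
move=> xA.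
have -> : [set z | colb x z] = \bigcup_M G x M.
  apply/setP => z; rewrite inE; apply/colP/bigcupP.
    by case=> M [_ nxz exM eMz]; exists M => //; rewrite /G exM !inE eq_sym nxz.
  case=> M _; rewrite /G; case: ifP => exM; last by rewrite inE.
  by rewrite !inE => /andP[nzx eMz]; exists M; split => //; rewrite eq_sym.
rewrite card_bigcup_disj.
  transitivity (\sum_(M | e x M) 2).
    rewrite [LHS](bigID (fun M => e x M)) /= [X in _ + X]big1 ?addn0.
      by apply: eq_bigr => M exM; rewrite /G exM card_NM.
    by move=> M hM; rewrite /G (negbTE hM) cards0.
  rewrite sum_nat_const.
  have -> : #|[pred M | e x M]| = 4 by rewrite -(hdB xA) /deg; apply: eq_card => M; rewrite inE.
  by [].
move=> M M' nMM'; apply: disjP => z; rewrite /G.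
case: ifP => exM; last by rewrite inE.
case: ifP => exM'; last by move=> _; rewrite inE.
rewrite !inE => /andP[nzx eMz] /andP[_ eM'z].
apply: (h4 (a:=x) (b:=M) (c:=z) (d:=M')) => //; ss.
Qed.

Lemma cnt_diag x : x \notin A -> cnt x x = 8.
Proof.
move=> xA; rewrite /cnt -(ncol xA); apply: eq_card => z; rewrite !inE.
by rewrite (col_sym z x) andbb.
Qed.

Lemma cnt_A x y : (x \in A) || (y \in A) -> cnt x y = 0.
Proof.
move=> h; apply/eqP; rewrite cards_eq0; apply/eqP/setP => z; rewrite !inE.
apply/negP => /andP[k1 k2]; move: h (colBy k2).
by case/colP: k1 => M [xA _ _ _]; rewrite (negbTE xA) /= => ->.
Qed.

Lemma cnt_col x y : colb x y -> cnt x y = 1.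
Proof.
case/colP => K [xA nxy exK eKy].
have KA := notAA exK xA.
rewrite /cnt.
have -> : [set z | colb x z && colb z y] = N K :\ x :\ y.
  apply/setP => z; rewrite !inE; apply/andP/and3P.
    case=> /colP[M1 [_ nxz exM1 eM1z]] /colP[M2 [zA nzy ezM2 eM2y]].
    split => //; first by rewrite eq_sym.
    apply/negP => /negP nKz.
    have nM1K : M1 != K by apply: contraNneq nKz => <-.
    have nKM2 : K != M2 by apply: contraNneq nKz => ->; rewrite hsym.
    have [eM12|nM12] := eqVneq M1 M2.
      subst M2; apply: (h4 (a:=x) (b:=K) (c:=y) (d:=M1)) => //; ss.
    apply: (h6 (a:=x) (b:=K) (c:=y) (d:=M2) (f:=z) (g:=M1)) => //; ss.
  case=> nzy nzx eKz; split; apply/colP.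
    by exists K; split => //; rewrite eq_sym.
  by exists K; split => //; [exact: AnotA eKz KA | rewrite hsym].
have hx : x \in N K by rewrite inE hsym.
have hy : y \in N K :\ x by rewrite !inE eq_sym nxy.
have c1 := cardsD1 x (N K); have c2 := cardsD1 y (N K :\ x).
rewrite hx in c1; rewrite hy in c2; have := hdA KA; rewrite /deg.
rewrite /N in c1 c2 *; move=> h; rewrite c2 h in c1; by move: c1; rewrite !add1n => -[->].
Qed.

Lemma cnt_ncol x y : x \notin A -> y \notin A -> x != y -> ~~ colb x y -> cnt x y = 4.
Proof.
move=> xA yA nxy ncxy.
have nMx : forall M, e y M -> ~~ e M x.
  move=> M eyM; apply: contra ncxy => eMx; apply/colP; exists M; split => //.
    by rewrite hsym.
  by rewrite hsym.
pose g M := odflt x [pick z | e M z && colb x z].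
have gP : forall M, e y M -> e M (g M) && colb x (g M).
  move=> M eyM; have MA := notAA eyM yA.
  have [q /andP[eMq cqx]] := gq MA xA (nMx M eyM).
  rewrite /g; case: pickP => [z //|/(_ q)]; by rewrite eMq col_sym cqx.
have gny : forall M, e y M -> g M != y.
  by move=> M /gP /andP[_ h]; apply: contraNneq ncxy => <-.
rewrite /cnt.
have -> : [set z | colb x z && colb z y] = g @: N y.
  apply/setP => z; rewrite inE; apply/andP/imsetP.
    case=> cxz /colP[M [zA nzy ezM eMy]]; exists M; first by rewrite inE hsym.
    have eyM : e y M by rewrite hsym.
    have MA := notAA eyM yA.
    case/andP: (gP M eyM) => eMg cxg.
    apply: (uniq_line MA (nMx M eyM)) => //; by rewrite hsym.
  case=> M; rewrite inE => eyM ->; case/andP: (gP M eyM) => eMg cxg.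
  split => //; apply/colP; exists M; split => //.
  - exact: AnotA eMg (notAA eyM yA).
  - exact: gny.
  - by rewrite hsym.
  - by rewrite hsym.
rewrite card_in_imset.
  exact: (hdB yA).
move=> M M'; rewrite !inE => eyM eyM' hg; apply/eqP/negP => /negP nMM'.
case/andP: (gP M eyM) => eMg _; case/andP: (gP M' eyM') => eM'g _.
apply: (h4 (a:=y) (b:=M) (c:=g M) (d:=M')) => //.
- by rewrite hg hsym.
- by rewrite hsym.
- by rewrite eq_sym gny.
Qed.


Section Mat.
Local Open Scope ring_scope.
Import GRing.Theory Num.Theory.

Definition ev (i : 'I_#|~: A|) : 'I_n := enum_val i.

Lemma ev_notA i : ev i \notin A.
Proof. by have := enum_valP i; rewrite in_setC. Qed.

Lemma sum_ev (P : pred 'I_n) : (forall z, P z -> z \notin A) ->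
  (\sum_(j < #|~: A|) (P (ev j) : nat) = #|[set z | P z]|)%N.
Proof.
move=> hP; rewrite /ev -(big_enum_val (A := mem (~: A)) (fun z => (P z : nat))) /=.
rewrite -sum1dep_card [RHS]big_mkcond [LHS]big_mkcond; apply: eq_bigr => x _.
case: (boolP (P x)) => h /=; first by rewrite inE (hP _ h).
by case: ifP.
Qed.

Definition Am : 'M[rat]_#|~: A| := \matrix_(i, j) (colb (ev i) (ev j))%:R.
Definition Jm : 'M[rat]_#|~: A| := const_mx 1.

Lemma colb_irr x : colb x x = false.
Proof. by rewrite /colb eqxx andbF. Qed.

Lemma natb_and (a b : bool) : ((a : nat) * (b : nat) = (a && b : nat))%N.
Proof. by case: a; case: b. Qed.

Lemma AA : Am *m Am = 4%:R *: 1%:M - 3%:R *: Am + 4%:R *: Jm.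
Proof.
apply/matrixP => i l; rewrite !mxE.
transitivity ((cnt (ev i) (ev l))%:R : rat).
  rewrite /cnt -(sum_ev (P := fun z => colb (ev i) z && colb z (ev l))); last by move=> z /andP[/colBy].
  rewrite natr_sum; apply: eq_bigr => j _; rewrite !mxE -natrM natb_and //.
have [<-|nil] := eqVneq i l.
  by rewrite colb_irr cnt_diag ?ev_notA //= eqxx; ring.
have nev : ev i != ev l by apply: contra nil => /eqP /enum_val_inj ->.

case: (boolP (colb (ev i) (ev l))) => hc.
  by rewrite cnt_col //; ring.
by rewrite cnt_ncol ?ev_notA //; ring.
Qed.

Lemma AJ : Am *m Jm = 8%:R *: Jm.
Proof.
apply/matrixP => i l; rewrite !mxE.
transitivity ((#|[set z | colb (ev i) z]|)%:R : rat).
  rewrite -(sum_ev (P := fun z => colb (ev i) z)); last by move=> z /colBy.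
  rewrite natr_sum; apply: eq_bigr => j _; rewrite !mxE mulr1 //.
by rewrite ncol ?ev_notA //; ring.
Qed.

Lemma JA : Jm *m Am = 8%:R *: Jm.
Proof.
apply/matrixP => i l; rewrite !mxE.
transitivity ((#|[set z | colb (ev l) z]|)%:R : rat).
  rewrite -(sum_ev (P := fun z => colb (ev l) z)); last by move=> z /colBy.
  rewrite natr_sum; apply: eq_bigr => j _; rewrite !mxE mul1r col_sym //.
by rewrite ncol ?ev_notA //; ring.
Qed.

Lemma JJ : Jm *m Jm = 21%:R *: Jm.
Proof.
apply/matrixP => i l; rewrite !mxE.
under eq_bigr do rewrite !mxE mulr1.
by rewrite sumr_const card_ord h21 mulr1 -[in RHS]mulr_natl mulr1.
Qed.

Definition Mm := 7%:R *: Am + 28%:R *: 1%:M - 4%:R *: Jm.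

Lemma MM : Mm *m Mm = 35%:R *: Mm.
Proof.
rewrite /Mm !(mulmxDl, mulmxDr, mulmxN, mulNmx).
rewrite -!scalemxAl -!scalemxAr !mul1mx !mulmx1 AA AJ JA JJ.
apply/matrixP => i j; rewrite !mxE; ring.
Qed.

Lemma no49 : False.
Proof.
pose E := (35%:R^-1 : rat) *: Mm.
have EE : E *m E = E.
  rewrite /E -scalemxAl -scalemxAr MM !scalerA; congr (_ *: _).
have := tr_idem EE.
have trM : \tr Mm = 504%:R.
  rewrite /mxtrace.
  transitivity (\sum_(i < #|~: A|) (24%:R : rat)).
    apply: eq_bigr => i _; rewrite !mxE eqxx colb_irr /=. ring.
  rewrite sumr_const card_ord h21 -mulr_natr; ring.
have -> : \tr E = 35%:R^-1 * 504%:R by rewrite /E mxtraceZ trM.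
move=> h.
have h' : (((\rank E * 35)%N)%:R : rat) = 504%:R.
  by rewrite natrM -h; field.
move/eqP: h'; rewrite eqr_nat => /eqP; lia.
Qed.

End Mat.
End SRG.

Lemma lower56 : (exists L, L \in A) -> 56 <= n.
Proof.
case=> L LA.
have h1 := count34; have h2 := ge21 LA.
have h3 : #|A| + #|~: A| = n by rewrite cardsC card_ord.
have [h21|n21] := eqVneq #|~: A| 21.
  by case: (no49 h21).
move/eqP: n21 => n21; lia.
Qed.
End Lower.

Theorem mainTheorem9 :
  (forall q : nat, prime_power q ->
     bbg_exists q q.+1 8 ((2 * q + 1) * (q ^ 2 - 1))) /\
  Bc_is 3 4 8 56.
Proof.
have part1 : forall q : nat, prime_power q ->
    bbg_exists q q.+1 8 ((2 * q + 1) * (q ^ 2 - 1)).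
  move=> q [p [k [pp [kp ->]]]].
  case: (pPrimePowerField pp kp) => F _ cF.
  rewrite -cF; exact: constr.
split => //; split.
  have h3 : prime_power 3 by exists 3, 1.
  exact: (part1 3 h3).
move=> m [e [[hsym hirr] [[A [hside [hdA hdB]]] [[c [[c3 cu] cs]] hall]]]].
have hall' : forall c, 3 <= size c -> ucycle e c -> 8 <= size c.
  by move=> c' h1 h2; apply: hall.
have h4 := girth_no4 hside hall'.
have h6 := girth_no6 hside hall'.
apply: (lower56 hsym hside hdA hdB h4 h6).
case: c cs {c3 cu} => [|x c'] // _.
case: (boolP (x \in A)) => xA; first by exists x.
have : 0 < deg e x by rewrite hdB.
rewrite /deg card_gt0 => /set0Pn[y]; rewrite inE => exy.
by exists y; apply: notAA exy xA.
Qed.
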